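(* If $X$ is a proper geodesic metric space, then its Freudenthal compactification coincides with its coarse Freudenthal compactification $CF(X)$ (i.e. the identity of $X$ extends to a homeomorphism between them).
   Context: The Freudenthal compactification of $X$ is $X\cup\mathrm{Ends}(X)$, where a Freudenthal end is a decreasing sequence $\{U_i\}_{i\ge1}$ with $U_i$ a component of $X\setminus K_i$, for an exhaustion of $X$ by compact sets $K_i\subset\operatorname{int}(K_{i+1})$; the topology has as basis the open subsets of $X$ with compact closure and the sets consisting of a component $U$ of some $X\setminus K_i$ together with all ends containing $U$. A glacial scale on $X$ is a sequence $\mathcal S=\{(K_i,n_i)\}_{i\ge1}$, $K_i$ bounded subsets, $n_i$ natural numbers, such that for every bounded $K$ and $r>0$ there is $i$ with $K\subset K_i$, $n_i>r$; an $\mathcal S$-chain is a finite sequence $x_1,\dots,x_n$ with, for each $i\le n-1$, some $m$ such that $x_i,x_{i+1}\notin K_m$ and $d(x_i,x_{i+1})\le n_m$; $f:X\to\mathbb R$ is glacially oscillating if for every $\epsilon>0$ there is a glacial scale $\mathcal S$ with $|f(x_1)-f(x_n)|<\epsilon$ for all $\mathcal S$-chains. The coarse Freudenthal compactification $CF(X)$ of a proper metric space $X$ is the compactification induced by all continuous glacially oscillating functions $X\to[0,1]$. *)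

(* Defs.v *)
(* R : realType, topologies represented explicitly as
   families of open sets (set (set T)). *)
From mathcomp Require Import all_boot all_order all_algebra.
From mathcomp Require Import boolp classical_sets reals.
From Stdlib Require List.
Set Implicit Arguments. Unset Strict Implicit. Unset Printing Implicit Defensive.
Import Order.TTheory GRing.Theory Num.Theory.
Local Open Scope ring_scope.
Local Open Scope classical_set_scope.

Section MetricDefs.
Variables (R : realType) (X : Type) (d : X -> X -> R).

Definition is_metric : Prop :=
  (forall x y, 0 <= d x y) /\ (forall x y, d x y = 0 <-> x = y) /\
  (forall x y, d x y = d y x) /\ (forall x y z, d x z <= d x y + d y z).

Definition mopen (U : set X) : Prop :=
  forall x, U x -> exists r, 0 < r /\ (forall y, d x y < r -> U y).

Definition compact_for (T : Type) (opens : set (set T)) (A : set T) : Prop :=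
  forall (I : Type) (G : I -> set T), (forall i, opens (G i)) ->
    (forall x, A x -> exists i, G i x) ->
    exists s : seq I, forall x, A x -> exists i, List.In i s /\ G i x.

Definition mcompact (A : set X) : Prop := compact_for mopen A.

Definition mclosure (A : set X) : set X :=
  fun x => forall r, 0 < r -> exists y, A y /\ d x y < r.

Definition minterior (A : set X) : set X :=
  fun x => exists r, 0 < r /\ (forall y, d x y < r -> A y).

Definition bounded (A : set X) : Prop :=
  exists r : R, forall y z, A y -> A z -> d y z <= r.

Definition proper_metric : Prop :=
  forall (x : X) (r : R), mcompact (fun y => d x y <= r).

Definition geodesic : Prop :=
  forall x y, exists g : R -> X, g 0 = x /\ g (d x y) = y /\
    (forall s t, 0 <= s <= d x y -> 0 <= t <= d x y ->
       d (g s) (g t) = `|s - t|).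

Definition mconnected (A : set X) : Prop :=
  forall U V, mopen U -> mopen V ->
    (forall x, A x -> U x \/ V x) ->
    (forall x, ~ (A x /\ U x /\ V x)) ->
    (forall x, ~ (A x /\ U x)) \/ (forall x, ~ (A x /\ V x)).

Definition component (S C : set X) : Prop :=
  exists x, S x /\
    C = (fun y => exists A, mconnected A /\ (forall z, A z -> S z) /\ A x /\ A y).

Definition mcontinuous (f : X -> R) : Prop :=
  forall x eps, 0 < eps -> exists del, 0 < del /\
    (forall y, d x y < del -> `|f x - f y| < eps).

Definition glacial_scale (Ks : nat -> set X) (ns : nat -> nat) : Prop :=
  (forall i, bounded (Ks i)) /\
  (forall (B : set X) (r : R), bounded B -> 0 < r ->
     exists i, (forall x, B x -> Ks i x) /\ r < (ns i)%:R).

Definition scale_chain (Ks : nat -> set X) (ns : nat -> nat)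
    (x : nat -> X) (n : nat) : Prop :=
  forall i, (i < n)%N -> exists m,
    ~ Ks m (x i) /\ ~ Ks m (x i.+1) /\ d (x i) (x i.+1) <= (ns m)%:R.

Definition glacially_oscillating (f : X -> R) : Prop :=
  forall eps, 0 < eps -> exists Ks ns, glacial_scale Ks ns /\
    forall x n, scale_chain Ks ns x n -> `|f (x 0%N) - f (x n)| < eps.

Definition exhaustion (K : nat -> set X) : Prop :=
  (forall i, mcompact (K i)) /\
  (forall i x, K i x -> minterior (K i.+1) x) /\
  (forall x, exists i, K i x).

Definition is_end (K : nat -> set X) (U : nat -> set X) : Prop :=
  forall i, component (~` K i) (U i) /\ (forall x, U i.+1 x -> U i x).

Definition Ends (K : nat -> set X) := {U : nat -> set X | is_end K U}.

Definition FX (K : nat -> set X) := (X + Ends K)%type.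

Definition fbasis (K : nat -> set X) (B : set (FX K)) : Prop :=
  (exists V : set X, mopen V /\ mcompact (mclosure V) /\
     B = (fun p => match p with inl x => V x | inr _ => False end)) \/
  (exists (i : nat) (U : set X), component (~` K i) U /\
     B = (fun p => match p with
                   | inl x => U x
                   | inr e => proj1_sig e i = U end)).

Definition fopen (K : nat -> set X) (W : set (FX K)) : Prop :=
  forall p, W p -> exists B, @fbasis K B /\ B p /\ (forall q, B q -> W q).

Definition GO := {f : X -> R |
  mcontinuous f /\ (forall x, 0 <= f x <= 1) /\ glacially_oscillating f}.

(** closure of the image of the evaluation map X -> [0,1]^GO
    in the product topology *)
Definition in_cf_closure (phi : GO -> R) : Prop :=
  forall (s : seq GO) (eps : R), 0 < eps -> exists x : X,
    forall f, List.In f s -> `|proj1_sig f x - phi f| < eps.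

Definition CF := {phi : GO -> R | in_cf_closure phi}.

Lemma cf_emb_proof (x : X) : in_cf_closure (fun f => proj1_sig f x).
Proof. by move=> s eps He; exists x => f _; rewrite subrr normr0. Qed.

Definition cf_emb (x : X) : CF := exist _ (fun f => proj1_sig f x) (cf_emb_proof x).

(** product (pointwise) topology restricted to CF *)
Definition cfopen (W : set CF) : Prop :=
  forall phi, W phi -> exists (s : seq GO) (eps : R), 0 < eps /\
    forall psi : CF,
      (forall f, List.In f s -> `|proj1_sig psi f - proj1_sig phi f| < eps) ->
      W psi.

End MetricDefs.

Definition homeomorphism (A B : Type) (oA : set (set A)) (oB : set (set B))
    (h : A -> B) : Prop :=
  bijective h /\
  (forall W, oB W -> oA (fun a => W (h a))) /\
  (forall W, oA W -> oB (fun b => exists a, W a /\ h a = b)).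

(* Main.v *)
Require Import Defs.
From mathcomp Require Import all_boot all_order all_algebra.
From mathcomp Require Import boolp classical_sets reals.
From mathcomp Require Import lra.
From Stdlib Require List.
Set Implicit Arguments. Unset Strict Implicit. Unset Printing Implicit Defensive.
Import Order.TTheory GRing.Theory Num.Theory.
Local Open Scope ring_scope.
Local Open Scope classical_set_scope.
Section ListUtil.
Variable R : realType.

Lemma list_min (I : Type) (s : seq I) (P : I -> R -> Prop) :
  (forall i, List.In i s -> exists del, 0 < del /\
      forall del', 0 < del' -> del' <= del -> P i del') ->
  exists del, 0 < del /\ forall del', 0 < del' -> del' <= del ->
     forall i, List.In i s -> P i del'.
Proof.
elim: s => [|a s IH] H; first by exists 1; split.
have [da [da0 Ha]] := H a (or_introl erefl).
have [ds [ds0 Hs]] := IH (fun i hi => H i (or_intror hi)).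
case: (lerP da ds) => hd.
- exists da; split => // e e0 eda i [<-|hi]; first exact: Ha.
  by apply: Hs => //; apply: le_trans hd.
- exists ds; split => // e e0 eds i [<-|hi]; last exact: Hs.
  by apply: Ha => //; apply: le_trans (ltW hd).
Qed.

Lemma list_ubR (s : seq R) : exists M, forall r, List.In r s -> r <= M.
Proof.
elim: s => [|a s [M HM]]; first by exists 0.
case: (lerP a M) => h.
- by exists M => r [<-|hr] //; apply: HM.
- exists a => r [<-|hr] //; apply: le_trans (HM r hr) (ltW h).
Qed.

Lemma list_ubN (s : seq nat) : exists M, forall r, List.In r s -> (r <= M)%N.
Proof.
elim: s => [|a s [M HM]]; first by exists 0%N.
exists (maxn a M) => r [<-|hr]; first by rewrite leq_maxl.
by apply: leq_trans (HM r hr) (leq_maxr _ _).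
Qed.

Lemma list_max (I : Type) (s : seq I) (P : I -> nat -> Prop) :
  (forall i, List.In i s -> exists n, forall m, (n <= m)%N -> P i m) ->
  exists n, forall i, List.In i s -> forall m, (n <= m)%N -> P i m.
Proof.
elim: s => [|a s IH] H; first by exists 0%N.
have [na Ha] := H a (or_introl erefl).
have [ns Hs] := IH (fun i hi => H i (or_intror hi)).
exists (maxn na ns) => i [<-|hi] m hm.
- by apply: Ha; apply: leq_trans hm; rewrite leq_maxl.
- by apply: Hs => //; apply: leq_trans hm; rewrite leq_maxr.
Qed.

Lemma eq_of_close (a b : R) : (forall eps, 0 < eps -> `|a - b| <= eps) -> a = b.
Proof.
move=> H; apply/eqP; rewrite -subr_eq0 -normr_eq0; apply/eqP.
have t0 := normr_ge0 (a - b); move: t0 H; set t := `|a - b| => t0 H.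
case: (ltrP 0 t) => ht; last lra.
have := H (t / 2) ltac:(lra); lra.
Qed.

Lemma exists_nat_gt (r : R) : exists n : nat, r < n%:R.
Proof. by exists (Num.truncn r).+1; apply: truncnS_gt. Qed.

End ListUtil.

Section Metric.
Variables (R : realType) (X : Type) (d : X -> X -> R).
Hypothesis Hm : is_metric d.

Lemma d_ge0 x y : 0 <= d x y. Proof. by case: Hm. Qed.
Lemma d_sym x y : d x y = d y x. Proof. by case: Hm => _ [_ []]. Qed.
Lemma d_tri x y z : d x z <= d x y + d y z. Proof. by case: Hm => _ [_ [_]]. Qed.
Lemma d_xx x : d x x = 0. Proof. by case: Hm => _ [H _]; exact: (proj2 (H x x) erefl). Qed.
Lemma d_eq0 x y : d x y = 0 -> x = y. Proof. by case: Hm => _ [H _]; exact: (proj1 (H x y)). Qed.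

Lemma d_lip c x y : `|d c x - d c y| <= d x y.
Proof.
rewrite ler_norml; have := d_tri c x y; have := d_tri c y x; rewrite (d_sym y x).
move=> h1 h2; apply/andP; split; lra.
Qed.

Lemma mopen_ball x r : mopen d (fun y => d x y < r).
Proof.
move=> y hy; exists (r - d x y); split; first lra.
move=> z hz; have := d_tri x y z; lra.
Qed.

Lemma minterior_open A : mopen d (minterior d A).
Proof.
move=> x [r [r0 hr]]; exists r; split => // y hy.
exists (r - d x y); split; first lra.
move=> z hz; apply: hr; have := d_tri x y z; lra.
Qed.

Lemma minterior_sub A x : minterior d A x -> A x.
Proof. by move=> [r [r0 hr]]; apply: hr; rewrite d_xx. Qed.

Lemma compact_bounded A c : mcompact d A -> exists rho, forall y, A y -> d c y <= rho.
Proof.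
move=> HA; have [] := HA R (fun r y => d c y < r).
- move=> r; exact: mopen_ball.
- by move=> y _; exists (d c y + 1); lra.
move=> s Hs; have [M HM] := list_ubR s.
exists M => y /Hs [r [hr hy]]; have := HM r hr; lra.
Qed.

Lemma compact_closed A : mcompact d A -> mopen d (~` A).
Proof.
move=> HA x hx.
have [] := HA {r : R | 0 < r} (fun r y => sval r < d x y).
- move=> [r r0] y /= hy; exists (d x y - r); split; first lra.
  move=> z hz; have := d_tri x z y; rewrite (d_sym z y); lra.
- move=> y hy; have hxy : d x y != 0.
    by apply/eqP => /d_eq0 exy; apply: hx; rewrite exy.
  have hp : 0 < d x y / 2 by have := d_ge0 x y; rewrite lt0r in hxy *; lra.
  by exists (exist (fun r : R => 0 < r) _ hp) => /=; lra.
move=> s Hs.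
have [del [del0 Hdel]] := list_min (P := fun (i : {r : R | 0 < r}) e => e <= sval i) (s := s)
   (fun i _ => ex_intro _ (sval i) (conj (svalP i) (fun e _ h => h))).
exists del; split => // y hy Ay; have [i [hi hiy]] := Hs y Ay.
have := Hdel del del0 (lexx _) i hi; lra.
Qed.

Lemma closed_sub_compact A C : mcompact d A -> mopen d (~` C) ->
  (forall x, C x -> A x) -> mcompact d C.
Proof.
move=> HA HC sCA I G HG Hcov.
have [] := HA (option I) (fun o => match o with Some i => G i | None => ~` C end).
- by case.
- move=> x Ax; case: (pselect (C x)) => hc.
  + by have [i hi] := Hcov x hc; exists (Some i).
  + by exists None.
move=> s Hs; exists (pmap id s) => x Cx.
have [[i|] [hi hx]] := Hs x (sCA x Cx); last by [].
exists i; split => //; elim: s hi {Hs} => [|a s IH] //= [->|h] /=; first by left.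
by case: a => [a|] /=; [right|]; apply: IH.
Qed.

Lemma mclosure_open A : mopen d (~` mclosure d A).
Proof.
move=> x hx; have [r hr] : exists r, ~ (0 < r -> exists y, A y /\ d x y < r).
  by apply/existsNP => H; apply: hx => r; exact: H.
have r0 : 0 < r by apply: contra_notP hr => h1 h2.
have hn : forall y, A y -> ~ d x y < r.
  by move=> y Ay hy; apply: hr => _; exists y.
exists (r / 2); split; first lra.
move=> z hz Hz; have [y [Ay hy]] := Hz (r / 2) ltac:(lra).
apply: (hn y Ay); have := d_tri x z y; lra.
Qed.

Lemma mclosure_ball x r y : mclosure d (fun z => d x z < r) y -> d x y <= r.
Proof.
move=> H; rewrite leNgt; apply/negP => hr.
have [z [hz hyz]] := H (d x y - r) ltac:(lra).
have := d_tri x z y; rewrite (d_sym z y); lra.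
Qed.

Hypothesis Hp : proper_metric d.

Lemma ball_compact_closure x r : mcompact d (mclosure d (fun z => d x z < r)).
Proof.
apply: (@closed_sub_compact (fun y => d x y <= r)); [exact: Hp| exact: mclosure_open|].
by move=> y; apply: mclosure_ball.
Qed.

End Metric.
Section Geo.
Variables (R : realType) (X : Type) (d : X -> X -> R).
Hypothesis Hm : is_metric d.

Definition comp (S : set X) (x : X) : set X :=
  fun y => exists A, mconnected d A /\ (forall z, A z -> S z) /\ A x /\ A y.

Lemma mconnected1 x : mconnected d (fun z => z = x).
Proof.
move=> U V _ _ cov disj; case: (cov x erefl) => h.
- by right => z [-> hz]; apply: (disj x); split.
- by left => z [-> hz]; apply: (disj x); split.
Qed.

Lemma mconnectedU A B : mconnected d A -> mconnected d B ->
  (exists z, A z /\ B z) -> mconnected d (A `|` B).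
Proof.
move=> cA cB [z [Az Bz]] U V oU oV cov disj.
have covA : forall x, A x -> U x \/ V x by move=> x hx; apply: cov; left.
have covB : forall x, B x -> U x \/ V x by move=> x hx; apply: cov; right.
have disjA : forall x, ~ (A x /\ U x /\ V x).
  by move=> x [hx hu]; apply: (disj x); split => //; left.
have disjB : forall x, ~ (B x /\ U x /\ V x).
  by move=> x [hx hu]; apply: (disj x); split => //; right.
case: (cA U V oU oV covA disjA) => hA; case: (cB U V oU oV covB disjB) => hB.
- by left => x [[hx|hx] hu]; [apply: (hA x)|apply: (hB x)].
- exfalso; case: (covA z Az) => h; first by apply: (hA z).
  by apply: (hB z).
- exfalso; case: (covA z Az) => h; last by apply: (hA z).
  by apply: (hB z).
- by right => x [[hx|hx] hu]; [apply: (hA x)|apply: (hB x)].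
Qed.

Lemma comp_S S x y : comp S x y -> S y.
Proof. by move=> [A [_ [hS [_ hy]]]]; apply: hS. Qed.

Lemma comp_Sx S x y : comp S x y -> S x.
Proof. by move=> [A [_ [hS [hx _]]]]; apply: hS. Qed.

Lemma comp_refl S x : S x -> comp S x x.
Proof. by move=> hx; exists (fun z => z = x); split; [apply: mconnected1| split => // z ->]. Qed.

Lemma comp_sym S x y : comp S x y -> comp S y x.
Proof. by move=> [A [h1 [h2 [h3 h4]]]]; exists A. Qed.

Lemma comp_trans S x y z : comp S x y -> comp S y z -> comp S x z.
Proof.
move=> [A [cA [sA [Ax Ay]]]] [B [cB [sB [By Bz]]]].
exists (A `|` B); split; first by apply: mconnectedU => //; exists y.
split; first by move=> w [/sA|/sB].
by split; [left|right].
Qed.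

Lemma comp_eq S x y : comp S x y -> comp S x = comp S y.
Proof.
move=> hxy; apply: funext => z; apply: propext; split => h.
- by apply: comp_trans (comp_sym hxy) h.
- by apply: comp_trans hxy h.
Qed.

Lemma component_comp S C : component d S C -> exists x, S x /\ C = comp S x.
Proof. by []. Qed.

Lemma comp_component S x : S x -> component d S (comp S x).
Proof. by move=> hx; exists x. Qed.

Lemma component_at S C y : component d S C -> C y -> C = comp S y.
Proof. by move=> [x [hx ->]] hy; apply: comp_eq. Qed.

Lemma component_eq S C C' z : component d S C -> component d S C' ->
  C z -> C' z -> C = C'.
Proof. by move=> h1 h2 z1 z2; rewrite (component_at h1 z1) (component_at h2 z2). Qed.

Lemma component_ne S C : component d S C -> exists x, C x.
Proof. by move=> [x [hx ->]]; exists x; apply: comp_refl. Qed.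

Lemma component_S S C y : component d S C -> C y -> S y.
Proof. by move=> [x [hx ->]]; apply: comp_S. Qed.

Lemma comp_mono (S S' : set X) x y : (forall z, S z -> S' z) -> comp S x y -> comp S' x y.
Proof.
move=> hS [A [cA [sA hA]]]; exists A; split => //; split => // z /sA; exact: hS.
Qed.

Lemma seg_connected (g : R -> X) (D : R) : 0 <= D ->
  (forall s t, 0 <= s <= D -> 0 <= t <= D -> d (g s) (g t) = `|s - t|) ->
  mconnected d (fun z => exists t, 0 <= t <= D /\ z = g t).
Proof.
move=> D0 Hg.
set A := (fun z => exists t, 0 <= t <= D /\ z = g t).
have claim : forall U V : set X, mopen d U -> mopen d V ->
   (forall x, A x -> U x \/ V x) -> (forall x, ~ (A x /\ U x /\ V x)) ->
   U (g 0) -> forall t, 0 <= t <= D -> U (g t).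
  move=> U V oU oV cov disj U0.
  pose S := [set t : R | 0 <= t <= D /\ forall u, 0 <= u <= t -> U (g u)].
  have S0 : S 0.
    split; first by apply/andP; split => //.
    move=> u /andP [h1 h2]; have -> : u = 0 by apply/le_anti/andP; split.
    exact: U0.
  have ubS : ubound S D by move=> t [/andP [_ h] _].
  have hsup : has_sup S by split; [exists 0 | exists D].
  set s := sup S.
  have s0 : 0 <= s by apply: ub_le_sup => //; exists D.
  have sD : s <= D by apply: ge_sup => //; exists 0.
  have As : A (g s) by exists s; split => //; apply/andP; split.
  have Us : U (g s).
    case: (cov _ As) => // Vs; exfalso.
    have [r [r0 hr]] := oV _ Vs.
    have [t St ht] := sup_adherent r0 hsup; rewrite -/s in ht.
    have ts : t <= s by apply: ub_le_sup => //; exists D.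
    move: (St) => [/andP [t0 tD] hU].
    apply: (disj (g t)); split; first by exists t; split => //; apply/andP; split.
    split; first by apply: hU; apply/andP; split.
    apply: hr; rewrite Hg; last by apply/andP; split.
      by rewrite ltr_distlC; apply/andP; split; lra.
    by apply/andP; split.
  have [r [r0 hr]] := oU _ Us.
  have r20 : 0 < r / 2 by lra.
  have [t St ht] := sup_adherent r20 hsup; rewrite -/s in ht.
  move: (St) => [/andP [t0 tD] hU].
  have key : forall u, 0 <= u -> u <= D -> u <= s + r / 2 -> U (g u).
    move=> u u0 uD us; case: (lerP u t) => hut.
      by apply: hU; apply/andP; split.
    apply: hr; rewrite Hg; first by rewrite ltr_distlC; apply/andP; split; lra.
      by apply/andP; split.
    by apply/andP; split.
  have DS : D <= s + r / 2 -> S D.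
    move=> h; split; first by apply/andP; split.
    by move=> u /andP [u0 uD]; apply: key => //; apply: le_trans uD h.
  case: (lerP D (s + r / 2)) => hD.
    move=> u /andP [u0 uD]; apply: key => //; apply: le_trans uD hD.
  exfalso.
  have : S (s + r / 2).
    split; first by apply/andP; split; lra.
    move=> u /andP [u0 us]; apply: key => //; lra.
  move=> /(ub_le_sup _) h.
  have : s + r / 2 <= s by apply: h; exists D.
  lra.
move=> U V oU oV cov disj.
have A0 : A (g 0) by exists 0; split => //; apply/andP; split.
case: (cov _ A0) => h0.
- right => z [[t [ht ->]] hv]; apply: (disj (g t)); split; first by exists t.
  by split => //; apply: (claim U V).
- have cov' : forall x, A x -> V x \/ U x by move=> x /cov [];[right|left].
  have disj' : forall x, ~ (A x /\ V x /\ U x)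
    by move=> x [h1 [h2 h3]]; apply: (disj x).
  left => z [[t [ht ->]] hu]; apply: (disj (g t)); split; first by exists t.
  by split => //; apply: (claim V U).
Qed.

Hypothesis Hg : geodesic d.

Lemma geo_comp S x y : (forall w, d x w <= d x y -> S w) -> comp S x y.
Proof.
move=> HS; have [g [g0 [gD gi]]] := Hg x y.
exists (fun z => exists t, 0 <= t <= d x y /\ z = g t); split.
  by apply: seg_connected => //; apply: (d_ge0 Hm).
split.
  move=> z [t [ht ->]]; apply: HS; rewrite -{1}g0 gi //.
    by rewrite sub0r normrN ger0_norm; case/andP: ht.
  by apply/andP; split => //; apply: (d_ge0 Hm).
split; first by exists 0; split => //; apply/andP; split => //; apply: (d_ge0 Hm).
by exists (d x y); split => //; apply/andP; split => //; apply: (d_ge0 Hm).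
Qed.

Lemma comp_open S x : mopen d S -> mopen d (comp S x).
Proof.
move=> oS y hy; have [r [r0 hr]] := oS y (comp_S hy).
exists r; split => // z hz; apply: comp_trans hy _; apply: geo_comp => w hw.
apply: hr; lra.
Qed.

Lemma comp_chain S x y del : mopen d S -> comp S x y -> 0 < del ->
  exists n (z : nat -> X), z 0%N = x /\ z n = y /\ (forall i, (i <= n)%N -> S (z i)) /\
     (forall i, (i < n)%N -> d (z i) (z i.+1) < del).
Proof.
move=> oS hxy del0.
pose reach w := exists n (z : nat -> X), z 0%N = x /\ z n = w /\
   (forall i, (i <= n)%N -> S (z i)) /\ (forall i, (i < n)%N -> d (z i) (z i.+1) < del).
have reach_ext : forall w w', reach w -> S w' -> d w w' < del -> reach w'.
  move=> w w' [n [z [z0 [zn [zS zd]]]]] Sw' dww'.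
  exists n.+1, (fun i => if (i <= n)%N then z i else w'); split => //.
  split; first by rewrite ltnn.
  split.
    move=> i hi; case: ifP => hin; first by apply: zS.
    by [].
  move=> i hi; rewrite ltnS in hi; rewrite hi.
  case: (ltnP i n) => hin.
    by apply: zd.
  have -> : i = n by apply/eqP; rewrite eqn_leq hi hin.
  by rewrite ?ltnn ?leqnn zn /=; move: dww'; rewrite ?ltnn ?leqnn /=.
have Sx := comp_Sx hxy.
have rx : reach x by exists 0%N, (fun _ => x); split => //; split => //; split.
move: hxy => [A [cA [sA [Ax Ay]]]].
pose U := fun z => exists w, S w /\ reach w /\ d w z < del.
pose V := fun z => exists w r, 0 < r /\ r <= del /\ (forall u, d w u < r -> S u) /\
   ~ reach w /\ d w z < r.
have oU : mopen d U.
  move=> z [w [Sw [rw hw]]]; exists (del - d w z); split; first lra.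
  move=> u hu; exists w; split => //; split => //; have := (d_tri Hm) w z u; lra.
have oV : mopen d V.
  move=> z [w [r [r0 [rd [hr [nr hw]]]]]]; exists (r - d w z); split; first lra.
  move=> u hu; exists w, r; split => //; split => //; split => //; split => //.
  have := (d_tri Hm) w z u; lra.
have := cA U V oU oV.
have cov : forall z, A z -> U z \/ V z.
  move=> z Az; have Sz := sA z Az.
  case: (pselect (reach z)) => hr.
    by left; exists z; split => //; split => //; rewrite (d_xx Hm).
  right; have [r [r0 hr0]] := oS z Sz.
  case: (lerP r del) => hrd.
    by exists z, r; split => //; split => //; split => //; split => //; rewrite (d_xx Hm).
  exists z, del; split => //; split => //; split.
    by move=> u hu; apply: hr0; lra.
  by split => //; rewrite (d_xx Hm).
have disj : forall z, ~ (A z /\ U z /\ V z).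
  move=> z [Az [[w [Sw [rw hw]]] [w' [r [r0 [rd [hr [nr hw']]]]]]]].
  have rz : reach z by apply: reach_ext rw (sA z Az) hw.
  apply: nr; apply: reach_ext rz _ _.
    by apply: hr; rewrite (d_xx Hm).
  rewrite (d_sym Hm); lra.
move=> /(_ cov disj) [hU|hV].
  by exfalso; apply: (hU x); split => //; exists x; split => //; split => //; rewrite (d_xx Hm).
have : reach y.
  apply: (contra_notP _ (hV y)) => nr; split => //.
  have Sy := sA y Ay; have [r [r0 hr0]] := oS y Sy.
  case: (lerP r del) => hrd.
    by exists y, r; split => //; split => //; split => //; split => //; rewrite (d_xx Hm).
  exists y, del; split => //; split => //; split.
    by move=> u hu; apply: hr0; lra.
  by split => //; rewrite (d_xx Hm).
by [].
Qed.

End Geo.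
Section Clamp.
Variable R : realType.
Definition clamp (t : R) : R := if t <= 0 then 0 else if t <= 1 then t else 1.

Lemma clamp_range t : 0 <= clamp t <= 1.
Proof.
rewrite /clamp; case: (lerP t 0) => h1 /=; first by rewrite lexx ler01.
case: (lerP t 1) => h2 /=; apply/andP; split; lra.
Qed.

Lemma clamp_lip a b : `|clamp a - clamp b| <= `|a - b|.
Proof.
have h1 := ler_norm (a - b); have h2 : - (a - b) <= `|a - b| by rewrite -normrN; exact: ler_norm.
rewrite ler_norml /clamp.
case: (lerP a 0) => ha; case: (lerP b 0) => hb /=;
  try case: (lerP a 1) => ha1; try case: (lerP b 1) => hb1 /=;
  apply/andP; split; lra.
Qed.

Lemma clamp0 t : t <= 0 -> clamp t = 0.
Proof. by rewrite /clamp => ->. Qed.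

Lemma clamp1 t : 1 <= t -> clamp t = 1.
Proof.
rewrite /clamp => h; case: (lerP t 0) => h0; first lra.
case: (lerP t 1) => h1 //; apply/le_anti; rewrite h1 h //.
Qed.

Lemma clamp_pos t : 0 < clamp t -> 0 < t.
Proof. rewrite /clamp; case: (lerP t 0) => h //; by rewrite ltxx. Qed.

Lemma clamp_gt0 t : 0 < t -> 0 < clamp t.
Proof. rewrite /clamp => h; case: (lerP t 0) => h0; first lra.
by case: (lerP t 1) => h1 //; rewrite ltr01. Qed.

End Clamp.

Section Main.
Variables (R : realType) (X : Type) (d : X -> X -> R).
Hypothesis Hm : is_metric d.
Hypothesis Hp : proper_metric d.
Hypothesis Hg : geodesic d.
Variable K : nat -> set X.
Hypothesis HK : exhaustion d K.
Variable x0 : X.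

Lemma K_compact i : mcompact d (K i). Proof. by case: HK. Qed.

Lemma K_succ i x : K i x -> K i.+1 x.
Proof. by case: HK => _ [h _] /h; apply: minterior_sub. Qed.

Lemma K_mono i j x : (i <= j)%N -> K i x -> K j x.
Proof.
move=> /subnK <-; elim: (j - i)%N => [|k IH] //= hx.
by rewrite addSn; apply: K_succ; apply: IH.
Qed.

Lemma compact_in_K A : mcompact d A -> exists i, forall x, A x -> K i x.
Proof.
move=> HA; have [] := HA nat (fun n => minterior d (K n.+1)).
- by move=> n; apply: (minterior_open Hm).
- move=> x Ax; have [_ [h1 h3]] := HK; have [i hi] := h3 x; exists i; exact: h1.
move=> s Hs; have [N HN] := list_ubN s.
exists N.+1 => x /Hs [n [hn hx]].
apply: (@K_mono n.+1 N.+1 x); first by rewrite ltnS; apply: HN.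
exact: (minterior_sub Hm hx).
Qed.

Lemma ballK c rho : exists i, forall y, d c y <= rho -> K i y.
Proof. by have [i hi] := compact_in_K (@Hp c rho); exists i. Qed.

Lemma K_open i : mopen d (~` K i).
Proof. have h := @K_compact i; move=> x hx; exact: (compact_closed Hm h hx). Qed.

Lemma K_bound i : exists rho : R, 0 <= rho /\ forall y, K i y -> d x0 y <= rho.
Proof.
have [rho Hr] := compact_bounded Hm x0 (@K_compact i).
case: (lerP 0 rho) => h; first by exists rho.
exists 0; split => // y /Hr; lra.
Qed.

Definition Rb i : R := projT1 (cid (K_bound i)).
Lemma Rb_ge0 i : 0 <= Rb i. Proof. by rewrite /Rb; case: (cid (K_bound i)) => r []. Qed.
Lemma Rb_spec i y : K i y -> d x0 y <= Rb i.
Proof. move=> hy; rewrite /Rb; case: (cid (K_bound i)) => r [_ h] /=; exact: h. Qed.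
Lemma Rb_out i y : Rb i < d x0 y -> ~ K i y.
Proof. by move=> h hK; have := Rb_spec hK; lra. Qed.

Lemma ball_scale c rho :
  glacial_scale d (fun m => fun z => d c z <= rho + 2 * m%:R) (fun m => m).
Proof.
split.
  move=> m; exists (2 * (rho + 2 * m%:R)) => y z hy hz.
  have := d_tri Hm y c z; rewrite (d_sym Hm y c); lra.
move=> B r [rB HB] r0.
case: (pselect (exists b, B b)) => [[b Bb]|nB].
- have [n1 hn1] := exists_nat_gt r.
  have [n2 hn2] := exists_nat_gt (d c b + rB - rho).
  exists (n1 + n2)%N; rewrite natrD; have := ler0n R n1; have := ler0n R n2.
  move=> p2 p1; split; last lra.
  move=> y By; have := d_tri Hm c b y; have := HB b y Bb By; lra.
- have [n hn] := exists_nat_gt r; exists n; split => // y By; exfalso; apply: nB; by exists y.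
Qed.

Lemma GO_support c rho (f : X -> R) : (forall z, rho < d c z -> f z = 0) ->
  glacially_oscillating d f.
Proof.
move=> Hf eps eps0; exists (fun m => fun z => d c z <= rho + 2 * m%:R), (fun m => m).
split; first exact: ball_scale.
move=> x n Hc; case: n Hc => [|n] Hc; first by rewrite subrr normr0.
have [m [h1 _]] := Hc 0%N isT.
have [m' [_ [h2 _]]] := Hc n (ltnSn n).
rewrite (Hf (x 0%N)); last first.
  have := ler0n R m; rewrite real_ltNge ?num_real //; move: h1 => /negP; lra.
rewrite (Hf (x n.+1)) ?subrr ?normr0 //.
have := ler0n R m'; move: h2 => /negP; rewrite -ltNge; lra.
Qed.

Lemma lip_cont (f : X -> R) : (forall x y, `|f x - f y| <= d x y) -> mcontinuous d f.
Proof.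
move=> Hf x eps eps0; exists eps; split => // y hy; have := Hf x y; lra.
Qed.

Definition bumpf (x : X) (r : R) (z : X) : R := clamp (r - d x z).

Lemma bump_GO_proof x r : mcontinuous d (bumpf x r) /\ (forall z, 0 <= bumpf x r z <= 1) /\
  glacially_oscillating d (bumpf x r).
Proof.
split.
  apply: lip_cont => y z; apply: le_trans (clamp_lip _ _) _.
  have -> : r - d x y - (r - d x z) = - (d x y - d x z) by lra.
  by rewrite normrN (d_lip Hm).
split; first by move=> z; apply: clamp_range.
apply: (GO_support (c := x) (rho := r)) => z hz; apply: clamp0; lra.
Qed.

Definition bumpGO x r : GO d := exist _ (bumpf x r) (bump_GO_proof x r).


Lemma min_pos (a b : R) : 0 < a -> 0 < b -> exists del, 0 < del /\ del <= a /\ del <= b.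
Proof. by move=> a0 b0; case: (lerP a b) => h; [exists a | exists b]; split => //; lra. Qed.

Lemma comp_far i a b : Rb i < d x0 a - d a b -> comp d (~` K i) a b.
Proof.
move=> h; apply: (geo_comp Hm Hg) => w hw; apply: Rb_out.
have := d_tri Hm x0 w a; rewrite (d_sym Hm w a); lra.
Qed.

Definition indU i u z : R := if pselect (comp d (~` K i) u z) then 1 else 0.
Definition gUf i u z : R := indU i u z * clamp (d x0 z - Rb i - 1).

Lemma indU_eq i u a b : comp d (~` K i) a b -> indU i u a = indU i u b.
Proof.
move=> hab; rewrite /indU; case: pselect => h1; case: pselect => h2 //; exfalso.
- by apply: h2; apply: comp_trans h1 hab.
- by apply: h1; apply: comp_trans h2 (comp_sym hab).
Qed.

Lemma indU01 i u z : indU i u z = 1 \/ indU i u z = 0.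
Proof. by rewrite /indU; case: (pselect (comp d (~` K i) u z)) => h; [left|right]. Qed.

Lemma gU_range i u z : 0 <= gUf i u z <= 1.
Proof.
rewrite /gUf; case: (indU01 i u z) => ->; rewrite ?mul1r ?mul0r; first exact: clamp_range.
by rewrite lexx ler01.
Qed.

Lemma gU_cont i u : mcontinuous d (gUf i u).
Proof.
move=> x eps eps0; rewrite /gUf.
case: (lerP (d x0 x) (Rb i + 1)) => hx.
- exists eps; split => // y hy; rewrite (@clamp0 _ (d x0 x - Rb i - 1)); last lra.
  rewrite mulr0 sub0r normrN.
  apply: (@le_lt_trans _ _ `|clamp (d x0 y - Rb i - 1)|).
    case: (indU01 i u y) => ->; rewrite ?mul1r ?mul0r ?normr0 //.
  have := clamp_lip (d x0 y - Rb i - 1) (d x0 x - Rb i - 1).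
  rewrite (@clamp0 _ (d x0 x - Rb i - 1)); last lra.
  rewrite subr0 => h; apply: le_lt_trans h _.
  have -> : d x0 y - Rb i - 1 - (d x0 x - Rb i - 1) = d x0 y - d x0 x by lra.
  have := d_lip Hm x0 y x; rewrite (d_sym Hm y x); lra.
- have hpos : 0 < d x0 x - Rb i - 1 by lra.
  have [del [del0 [h1 h2]]] := min_pos eps0 hpos.
  exists del; split => // y hy.
  rewrite -(indU_eq u (comp_far (a := x) (b := y) _)); last lra.
  rewrite -mulrBr normrM.
  apply: (@le_lt_trans _ _ `|clamp (d x0 x - Rb i - 1) - clamp (d x0 y - Rb i - 1)|).
    case: (indU01 i u x) => ->; rewrite ?normr1 ?mul1r ?normr0 ?mul0r //.
  apply: le_lt_trans (clamp_lip _ _) _.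
  have -> : d x0 x - Rb i - 1 - (d x0 y - Rb i - 1) = d x0 x - d x0 y by lra.
  have := d_lip Hm x0 x y; lra.
Qed.

Lemma gU_step i u a b (m : nat) :
  ~ (d x0 a <= Rb i + 2 + 2 * m%:R) -> ~ (d x0 b <= Rb i + 2 + 2 * m%:R) ->
  d a b <= m%:R -> gUf i u a = gUf i u b.
Proof.
move=> /negP ha /negP hb hab; rewrite -ltNge in ha; rewrite -ltNge in hb.
have m0 := ler0n R m.
rewrite /gUf (indU_eq u (comp_far (a := a) (b := b) _)); last lra.
by rewrite !clamp1 //; lra.
Qed.

Lemma gU_GO i u : glacially_oscillating d (gUf i u).
Proof.
move=> eps eps0.
exists (fun m => fun z => d x0 z <= (Rb i + 2) + 2 * m%:R), (fun m => m).
split; first exact: ball_scale.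
move=> x n Hc.
have : forall j, (j <= n)%N -> gUf i u (x j) = gUf i u (x 0%N).
  elim => [|j IH] hj //; rewrite -IH; last exact: ltnW.
  have [m [h1 [h2 h3]]] := Hc j hj; symmetry; exact: gU_step h1 h2 h3.
by move=> /(_ n (leqnn n)) ->; rewrite subrr normr0.
Qed.

Definition gGO i u : GO d :=
  exist _ (gUf i u) (conj (gU_cont i u) (conj (gU_range i u) (gU_GO i u))).

Lemma gU_pos i u z : 0 < gUf i u z -> comp d (~` K i) u z.
Proof.
rewrite /gUf /indU; case: (pselect (comp d (~` K i) u z)) => // h; by rewrite mul0r ltxx.
Qed.

Lemma gU_one i u z : comp d (~` K i) u z -> Rb i + 2 <= d x0 z -> gUf i u z = 1.
Proof.
move=> hc hz; rewrite /gUf /indU; case: (pselect (comp d (~` K i) u z)) => // h.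
by rewrite mul1r clamp1 //; lra.
Qed.

Lemma gU_zero i u z : ~ comp d (~` K i) u z -> gUf i u z = 0.
Proof. by move=> hc; rewrite /gUf /indU; case: (pselect (comp d (~` K i) u z)) => // h; rewrite mul0r. Qed.

Lemma osc (f : GO d) eps : 0 < eps -> exists i0, forall i, (i0 <= i)%N ->
  forall a b, comp d (~` K i) a b -> `|sval f a - sval f b| < eps.
Proof.
move=> eps0; have [_ [_ GOf]] := svalP f.
have [Ks [ns [[bKs covKs] Hch]]] := GOf eps eps0.
have [m [_ hm]] := covKs set0 1 (ex_intro _ 0 (fun _ _ h => False_ind _ h)) ltr01.
have [i0 Hi0] : exists i0, forall z, Ks m z -> K i0 z.
  case: (pselect (exists k, Ks m k)) => [[k hk]|nk].
  - have [rk Hrk] := bKs m; have [i0 Hi0] := ballK k rk.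
    by exists i0 => z hz; apply: Hi0; apply: Hrk.
  - by exists 0%N => z hz; exfalso; apply: nk; exists z.
exists i0 => i hi a b hab.
have [n [z [z0 [zn [zS zd]]]]] := comp_chain Hm (@K_open i) hab ltr01.
rewrite -z0 -zn; apply: Hch => j hj; exists m; split.
  by move=> /Hi0 /(K_mono hi); apply: zS; apply: ltnW.
split.
  by move=> /Hi0 /(K_mono hi); apply: zS.
by have := zd j hj; lra.
Qed.

Lemma end_comp (e : Ends d K) i : component d (~` K i) (sval e i).
Proof. by case: (svalP e i). Qed.

Lemma end_sub (e : Ends d K) i j y : (i <= j)%N -> sval e j y -> sval e i y.
Proof.
move=> /subnK <-; elim: (j - i)%N y => [|k IH] y //= hy.
by apply: IH; case: (svalP e (k + i)%N) => _; apply; rewrite -addSn.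
Qed.

Lemma end_ne (e : Ends d K) i : exists y, sval e i y.
Proof. exact: component_ne (end_comp e i). Qed.

Definition Lset (e : Ends d K) (f : GO d) :=
  [set r : R | exists i, forall y, sval e i y -> r <= sval f y].
Definition L (e : Ends d K) (f : GO d) : R := sup (Lset e f).

Lemma L_spec (f : GO d) eps : 0 < eps -> exists i0, forall (e : Ends d K) i,
  (i0 <= i)%N -> forall y, sval e i y -> `|sval f y - L e f| <= eps.
Proof.
move=> eps0; have [i0 Hi0] := osc f eps0.
have [_ [rf _]] := svalP f.
exists i0 => e i hi y hy.
have hsup : has_sup (Lset e f).
  split; first by exists 0, 0%N => w _; case/andP: (rf w).
  exists 1 => r [j hj]; have [w hw] := end_ne e j.
  by apply: le_trans (hj w hw) _; case/andP: (rf w).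
have comp_y : forall w, sval e i w -> `|sval f y - sval f w| < eps.
  move=> w hw; apply: (Hi0 i hi).
  have := component_at (end_comp e i) hy => heq.
  by rewrite heq in hw.
have low : sval f y - eps <= L e f.
  apply: ub_le_sup; first by case: hsup.
  exists i => w /comp_y; rewrite ltr_norml => /andP [h1 h2]; lra.
have up : L e f <= sval f y + eps.
  apply: ge_sup; first by case: hsup.
  move=> r [j hj]; have [w hw] := end_ne e (maxn i j).
  have := hj w (end_sub (leq_maxr i j) hw).
  have := comp_y w (end_sub (leq_maxl i j) hw); rewrite ltr_norml => /andP [h1 h2]; lra.
by rewrite ler_norml; apply/andP; split; lra.
Qed.

Lemma L_eq (e : Ends d K) (f : GO d) v :
  (forall eps, 0 < eps -> exists i, forall y, sval e i y -> `|sval f y - v| <= eps) ->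
  L e f = v.
Proof.
move=> H; apply: eq_of_close => eps eps0.
have e2 : 0 < eps / 2 by lra.
have [i0 Hi0] := L_spec f e2; have [i1 Hi1] := H _ e2.
have [y hy] := end_ne e (maxn i0 i1).
have := Hi0 e _ (leq_maxl i0 i1) y hy.
have := Hi1 y (end_sub (leq_maxr i0 i1) hy).
rewrite !ler_norml => /andP [h1 h2] /andP [h3 h4]; apply/andP; split; lra.
Qed.

Lemma L_closure (e : Ends d K) : in_cf_closure (L e).
Proof.
move=> s eps eps0.
have e2 : 0 < eps / 2 by lra.
have [n Hn] : exists n, forall f, List.In f s -> forall m, (n <= m)%N ->
    forall y, sval e m y -> `|sval f y - L e f| < eps.
  apply: (list_max (P := fun f m => forall y, sval e m y -> `|sval f y - L e f| < eps)).
  move=> f _; have [i0 Hi0] := L_spec f e2; exists i0 => m hm y hy.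
  by apply: le_lt_trans (Hi0 e m hm y hy) _; lra.
have [y hy] := end_ne e n; exists y => f hf; exact: Hn f hf n (leqnn n) y hy.
Qed.

Definition hE (e : Ends d K) : CF d := exist _ (L e) (L_closure e).

Definition hmap (p : FX d K) : CF d :=
  match p with inl x => cf_emb d x | inr e => hE e end.


Lemma L_bump (e : Ends d K) x r : L e (bumpGO x r) = 0.
Proof.
apply: L_eq => eps eps0; have [i Hi] := ballK x r; exists i => y hy.
have nK : ~ K i y := component_S (end_comp e i) hy.
have hr : r < d x y by rewrite ltNge; apply/negP => h; apply: nK; apply: Hi.
rewrite /= /bumpf clamp0; last lra.
by rewrite subrr normr0 ltW.
Qed.

Lemma L_gU_in (e : Ends d K) i u :
  (forall y, sval e i y -> comp d (~` K i) u y) -> L e (gGO i u) = 1.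
Proof.
move=> H; apply: L_eq => eps eps0; have [j Hj] := ballK x0 (Rb i + 2).
exists (maxn i j) => y hy.
have nK : ~ K (maxn i j) y := component_S (end_comp e _) hy.
have hr : Rb i + 2 <= d x0 y.
  rewrite leNgt; apply/negP => h; apply: nK; apply: (K_mono (leq_maxr i j)).
  by apply: Hj; lra.
rewrite /= gU_one //; first by rewrite subrr normr0 ltW.
by apply: H; apply: end_sub hy; apply: leq_maxl.
Qed.

Lemma L_gU_out (e : Ends d K) i u :
  (forall y, sval e i y -> ~ comp d (~` K i) u y) -> L e (gGO i u) = 0.
Proof.
move=> H; apply: L_eq => eps eps0; exists i => y hy.
by rewrite /= gU_zero ?subrr ?normr0 ?ltW //; apply: H.
Qed.

Lemma L_gU_pos (e : Ends d K) i u : 0 < L e (gGO i u) -> sval e i = comp d (~` K i) u.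
Proof.
move=> hL; have [y [hy hc]] : exists y, sval e i y /\ comp d (~` K i) u y.
  case: (pselect (exists y, sval e i y /\ comp d (~` K i) u y)) => // hn; exfalso.
  have : L e (gGO i u) = 0 by apply: L_gU_out => y hy hc; apply: hn; exists y.
  lra.
rewrite (component_at (end_comp e i) hy); symmetry; exact: comp_eq hc.
Qed.

Lemma end_eq (e e' : Ends d K) : sval e = sval e' -> e = e'.
Proof. by case: e => U hU; case: e' => U' hU' /= h; apply: eq_exist. Qed.

Lemma cf_eq (a b : CF d) : (forall f, sval a f = sval b f) -> a = b.
Proof. by case: a => a ha; case: b => b hb /= h; apply: eq_exist; apply: funext. Qed.

Lemma d_pos x y : x <> y -> 0 < d x y.
Proof.
move=> hxy; rewrite lt0r d_ge0 // andbT; apply/eqP => h; apply: hxy; exact: (d_eq0 Hm).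
Qed.

Lemma hmap_inj : injective hmap.
Proof.
move=> [x|e] [y|e'] /(congr1 sval) H.
- case: (pselect (x = y)) => [->//|hxy]; exfalso.
  have := congr1 (fun F => F (bumpGO x (d x y))) H => /=.
  rewrite /bumpf (d_xx Hm) subr0 subrr (@clamp0 _ 0) // => /eqP.
  by rewrite gt_eqF // clamp_gt0 // d_pos.
- exfalso; have := congr1 (fun F => F (bumpGO x 1)) H => /=.
  rewrite L_bump /bumpf (d_xx Hm) subr0 clamp1 //; by move/eqP; rewrite oner_eq0.
- exfalso; have := congr1 (fun F => F (bumpGO y 1)) H => /=.
  rewrite L_bump /bumpf (d_xx Hm) subr0 clamp1 //; by move/eqP; rewrite eq_sym oner_eq0.
- congr inr; apply: end_eq; case: (pselect (sval e = sval e')) => // hne; exfalso.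
  have [i hi] : exists i, sval e i <> sval e' i.
    by apply/existsNP => hall; apply: hne; apply: funext.
  have [u [hu eu]] := end_comp e i.
  have := congr1 (fun F => F (gGO i u)) H => /=.
  rewrite (L_gU_in (e := e) (i := i) (u := u)); last by rewrite eu.
  rewrite (L_gU_out (e := e') (i := i) (u := u)); first by move/eqP; rewrite oner_eq0.
  move=> y hy hc; apply: hi; symmetry.
  apply: component_eq (end_comp e' i) (end_comp e i) hy _.
  by rewrite eu.
Qed.


Lemma In_map (A B : Type) (F : A -> B) (s : seq A) a : List.In a s -> List.In (F a) (map F s).
Proof. elim: s => [|b s IH] //= [->|h]; [by left|by right; apply: IH]. Qed.

Lemma surjA (phi : CF d) rho : 0 < sval phi (bumpGO x0 rho) -> exists x, cf_emb d x = phi.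
Proof.
move=> hpos; case: (pselect (exists x, cf_emb d x = phi)) => // hno; exfalso.
pose I := {x : X | d x0 x <= rho}.
have hF : forall i : I, exists f : GO d, sval f (sval i) <> sval phi f.
  move=> [x hx] /=; apply/existsNP => hall; apply: hno; exists x; apply: cf_eq => f /=.
  by case: (pselect (sval f x = sval phi f)) => // h; exfalso; apply: (hall f).
have [F HF] := choice hF.
pose del (i : I) := `|sval (F i) (sval i) - sval phi (F i)| / 2.
have del0 : forall i, 0 < del i.
  move=> i; have : 0 < `|sval (F i) (sval i) - sval phi (F i)|.
    by rewrite normr_gt0 subr_eq0; apply/eqP; exact: HF i.
  rewrite /del; lra.
pose G (i : I) := fun z => del i < `|sval (F i) z - sval phi (F i)|.
have oG : forall i, mopen d (G i).
  move=> i z hz; have [cF _] := svalP (F i).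
  have m0 : 0 < `|sval (F i) z - sval phi (F i)| - del i by rewrite /G in hz; lra.
  have [del' [d0 hd]] := cF z _ m0.
  exists del'; split => // w hw; rewrite /G.
  have := hd w hw; have := ler_distD (sval (F i) w) (sval (F i) z) (sval phi (F i)).
  rewrite distrC; lra.
have [s Hs] : exists s : seq I, forall x, d x0 x <= rho -> exists i, List.In i s /\ G i x.
  apply: (@Hp x0 rho I G oG).
  move=> z hz; exists (exist _ z hz); rewrite /G /=.
  have := del0 (exist _ z hz); rewrite /del /=; lra.
have [eps1 [e10 He1]] := list_min (P := fun i e => e <= del i) (s := s)
   (fun i _ => ex_intro _ (del i) (conj (del0 i) (fun e _ h => h))).
have [eps [eps0 [h1 h2]]] := min_pos e10 hpos.
have [z Hz] := svalP phi (bumpGO x0 rho :: map F s) eps eps0.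
have hb := Hz _ (or_introl erefl); rewrite /= /bumpf in hb.
have hz : 0 < rho - d x0 z.
  apply: clamp_pos; move: hb; rewrite ltr_distlC => /andP [hb1 hb2]; lra.
have [i [hi hGi]] := Hs z ltac:(lra).
have := Hz (F i) (or_intror (In_map F hi)).
have := He1 eps eps0 h1 i hi; rewrite /G in hGi; lra.
Qed.

Section CaseB.
Variable phi : CF d.
Hypothesis hB : forall rho, ~ 0 < sval phi (bumpGO x0 rho).

Lemma phi_bump_le rho : sval phi (bumpGO x0 rho) <= 0.
Proof. by rewrite leNgt; apply/negP; apply: hB. Qed.

Lemma far_of_bump i z : `|sval (bumpGO x0 (Rb i + 3)) z - sval phi (bumpGO x0 (Rb i + 3))| < 1/2 ->
  Rb i + 2 < d x0 z.
Proof.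
have := phi_bump_le (Rb i + 3); rewrite /= /bumpf => hp hz.
rewrite ltNge; apply/negP => h; move: hz; rewrite clamp1; last lra.
rewrite ltr_distlC => /andP [h1 h2]; lra.
Qed.

Lemma stepB1 i : exists u, (~` K i) u /\ 1/2 < sval phi (gGO i u).
Proof.
have [s Hs] : exists s : seq X, forall x, d x0 x <= Rb i + 2 ->
    exists c, List.In c s /\ d c x < 1/4.
  apply: (@Hp x0 (Rb i + 2) X (fun c w => d c w < 1/4) (fun c => mopen_ball Hm (x:=c) (r:=1/4))).
  by move=> z _; exists z; rewrite (d_xx Hm); lra.
have e0 : 0 < 1/2 :> R by lra.
have [z Hz] := svalP phi (bumpGO x0 (Rb i + 3) :: map (gGO i) s) (1/2) e0.
have hfar := far_of_bump (Hz _ (or_introl erefl)).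
have [g [g0 [gD gi]]] := Hg x0 z.
have R0 := Rb_ge0 i.
have ht : 0 <= Rb i + 3/2 <= d x0 z by apply/andP; split; lra.
have hD : 0 <= d x0 z <= d x0 z by apply/andP; split; lra.
have h0 : (0:R) <= 0 <= d x0 z by rewrite lexx (d_ge0 Hm).
set a := g (Rb i + 3/2).
have da : d x0 a = Rb i + 3/2.
  rewrite /a -{1}g0 (gi 0 (Rb i + 3/2) h0 ht) sub0r normrN ger0_norm //; lra.
have daz : d a z = d x0 z - (Rb i + 3/2).
  by rewrite /a -{1}gD (gi (Rb i + 3/2) (d x0 z) ht hD) distrC ger0_norm //; case/andP: ht => _ h; lra.
have cza : comp d (~` K i) z a.
  apply: comp_far; rewrite (d_sym Hm z a) daz; lra.
have [c [hc hca]] := Hs a ltac:(lra).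
have cac : comp d (~` K i) a c.
  apply: comp_far; rewrite (d_sym Hm a c) da; lra.
have czc := comp_sym (comp_trans cza cac).
exists c; split; first exact: comp_Sx czc.
have := Hz (gGO i c) (or_intror (In_map _ hc)).
rewrite /= gU_one //; last lra.
rewrite ltr_distlC => /andP [h1 h2]; lra.
Qed.

Lemma stepB2 i u u' : 1/2 < sval phi (gGO i u) -> 1/2 < sval phi (gGO i u') ->
  comp d (~` K i) u = comp d (~` K i) u'.
Proof.
move=> h1 h2; have e0 : 0 < 1/2 :> R by lra.
have [z Hz] := svalP phi [:: gGO i u; gGO i u'] (1/2) e0.
have hz1 := Hz _ (or_introl erefl).
have hz2 := Hz _ (or_intror (or_introl erefl)).
rewrite /= in hz1 hz2.
have c1 : comp d (~` K i) u z.
  apply: gU_pos; move: hz1; rewrite ltr_distlC => /andP [a1 a2]; lra.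
have c2 : comp d (~` K i) u' z.
  apply: gU_pos; move: hz2; rewrite ltr_distlC => /andP [a1 a2]; lra.
by rewrite (comp_eq c1) (comp_eq c2).
Qed.

Definition uf : nat -> X := projT1 (choice stepB1).
Lemma uf_spec i : (~` K i) (uf i) /\ 1/2 < sval phi (gGO i (uf i)).
Proof. exact: (projT2 (choice stepB1) i). Qed.

Definition Ef i := comp d (~` K i) (uf i).

Lemma notK_mono i z : (~` K i.+1) z -> (~` K i) z.
Proof. by move=> h hK; apply: h; apply: K_succ. Qed.

Lemma Ef_end : is_end d K Ef.
Proof.
move=> i; split; first by apply: comp_component; case: (uf_spec i).
set u' := uf i.+1.
have hu' : 1/2 < sval phi (gGO i u').
  have e0 : 0 < 1/4 :> R by lra.
  have [z Hz] := svalP phi [:: gGO i.+1 u'; gGO i u'; bumpGO x0 (Rb i + 3)] (1/4) e0.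
  have hz1 := Hz _ (or_introl erefl).
  have hz2 := Hz _ (or_intror (or_introl erefl)).
  have hz3 := Hz _ (or_intror (or_intror (or_introl erefl))).
  have q : 1/4 < 1/2 :> R by lra.
  have hfar := far_of_bump (lt_trans hz3 q).
  have c1 : comp d (~` K i.+1) u' z.
    apply: gU_pos; have := (uf_spec i.+1).2; rewrite -/u' => hp.
    move: hz1; rewrite /= ltr_distlC => /andP [a1 a2]; lra.
  have c2 : comp d (~` K i) u' z := comp_mono (@notK_mono i) c1.
  move: hz2; rewrite /= gU_one //; last lra.
  rewrite ltr_distlC => /andP [a1 a2]; lra.
have heq := stepB2 (uf_spec i).2 hu'.
move=> x hx; rewrite /Ef heq; exact: comp_mono (@notK_mono i) hx.
Qed.

Definition eB : Ends d K := exist _ Ef Ef_end.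

Lemma surjB : hE eB = phi.
Proof.
apply: cf_eq => f /=; apply: L_eq => eps eps0.
have e2 : 0 < eps / 2 by lra.
have [i0 Hi0] := osc f e2.
have h12 : 0 < 1/2 :> R by lra.
have [del [del0 [dl1 dl2]]] := min_pos e2 h12.
have [z Hz] := svalP phi [:: f; gGO i0 (uf i0)] del del0.
have hz1 := Hz _ (or_introl erefl).
have hz2 := Hz _ (or_intror (or_introl erefl)).
have cz : comp d (~` K i0) (uf i0) z.
  apply: gU_pos; have := (uf_spec i0).2 => hp.
  move: hz2; rewrite /= ltr_distlC => /andP [a1 a2]; lra.
exists i0 => y hy.
have := Hi0 i0 (leqnn _) y z (comp_trans (comp_sym hy) cz).
move: hz1; rewrite /= !ltr_norml ler_norml => /andP [a1 a2] /andP [a3 a4].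
apply/andP; split; lra.
Qed.

End CaseB.

Lemma hmap_surj (phi : CF d) : exists p, hmap p = phi.
Proof.
case: (pselect (exists rho, 0 < sval phi (bumpGO x0 rho))) => [[rho hr]|hn].
- by have [x hx] := surjA hr; exists (inl x).
- exists (inr (eB (phi := phi) (fun rho hr => hn (ex_intro _ rho hr)))).
  exact: surjB.
Qed.


Lemma hmap_cont W : @cfopen R X d W -> @fopen R X d K (fun p => W (hmap p)).
Proof.
move=> HW [x|e] Wp.
- have [s [eps [eps0 Hs]]] := HW _ Wp.
  have [del [del0 Hdel]] : exists del, 0 < del /\ forall y, d x y < del ->
      forall f, List.In f s -> `|sval f y - sval f x| < eps.
    have [del [del0 H]] : exists del, 0 < del /\ forall del', 0 < del' -> del' <= del ->
        forall f, List.In f s -> forall y, d x y < del' -> `|sval f y - sval f x| < eps.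
      apply: (list_min (P := fun f del => forall y, d x y < del -> `|sval f y - sval f x| < eps)).
      move=> f _; have [cf _] := svalP f; have [df [df0 hdf]] := cf x eps eps0.
      exists df; split => // del' _ hle y hy; rewrite distrC; apply: hdf.
      exact: lt_le_trans hy hle.
    by exists del; split => // y hy f hf; apply: (H del del0 (lexx _) f hf y hy).
  exists (fun q : FX d K => match q with inl y => is_true (d x y < del) | inr _ => False end).
  split.
    left; exists (fun y => d x y < del); split; first exact: mopen_ball.
    by split; first exact: ball_compact_closure.
  split; first by rewrite /= (d_xx Hm).
  by move=> [y|e'] //= hy; apply: Hs => f hf /=; apply: Hdel.
- have [s [eps [eps0 Hs]]] := HW _ Wp.
  have e3 : 0 < eps / 3 by lra.
  have [n Hn] : exists n, forall f, List.In f s -> forall m, (n <= m)%N ->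
      forall (e' : Ends d K) y, sval e' m y -> `|sval f y - L e' f| <= eps / 3.
    apply: (list_max (P := fun f m => forall (e' : Ends d K) y, sval e' m y ->
        `|sval f y - L e' f| <= eps / 3)).
    by move=> f _; have [i0 Hi0] := L_spec f e3; exists i0 => m hm e' y hy; exact: (Hi0 e' m hm y hy).
  exists (fun q : FX d K => match q with inl y => sval e n y | inr e' => sval e' n = sval e n end).
  split; first by right; exists n, (sval e n); split => //; exact: end_comp.
  split => //.
  move=> [y|e'] /= hq; apply: Hs => f hf /=.
  + by apply: le_lt_trans (Hn f hf n (leqnn _) e y hq) _; lra.
  + have [y hy] := end_ne e' n.
    have h1 := Hn f hf n (leqnn _) e' y hy.
    rewrite hq in hy; have h2 := Hn f hf n (leqnn _) e y hy.
    move: h1 h2; rewrite !ler_norml ltr_norml => /andP [a1 a2] /andP [a3 a4].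
    apply/andP; split; lra.
Qed.

Lemma hmap_open W : @fopen R X d K W -> @cfopen R X d (fun b => exists a, W a /\ hmap a = b).
Proof.
move=> HW phi [a [Wa <-]]; have [B [fB [Ba BW]]] := HW a Wa.
case: a Wa Ba => [x|e] Wa Ba.
- have [O [oO [Ox OW]]] : exists O, mopen d O /\ O x /\ forall y, O y -> W (inl y).
    case: fB => [[V [oV [_ hB]]]|[i [U [cU hB]]]]; rewrite hB in Ba BW.
    + by exists V; split => //; split => // y Vy; apply: BW.
    + exists U; split; last by split => // y Uy; apply: BW.
      have [u [_ ->]] := cU; apply: (comp_open Hm Hg); exact: (@K_open i).
  have [r [r0 hr]] := oO x Ox.
  have fx : 0 < sval (bumpGO x r) x by rewrite /= /bumpf (d_xx Hm) subr0 clamp_gt0.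
  exists [:: bumpGO x r], (sval (bumpGO x r) x); split => // psi Hpsi.
  have hp := Hpsi _ (or_introl erefl).
  have [q hq] := hmap_surj psi; exists q; split => //.
  case: q hq => [y|e'] hq; rewrite -hq /= in hp.
  + apply: OW; apply: hr; move: hp; rewrite /bumpf ltr_distlC => /andP [h1 h2].
    have : 0 < r - d x y by apply: clamp_pos; lra.
    lra.
  + by move: hp; rewrite L_bump sub0r normrN ger0_norm ?ltxx // ltW.
- case: fB => [[V [oV [_ hB]]]|[i [U [cU hB]]]]; rewrite hB in Ba BW; first by [].
  have [u [hu hUu]] := cU.
  have L1 : L e (gGO i u) = 1 by apply: L_gU_in => y; rewrite Ba hUu.
  exists [:: gGO i u], (1/2); split; first lra.
  move=> psi Hpsi; have [q hq] := hmap_surj psi; exists q; split => //.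
  apply: BW; have := Hpsi _ (or_introl erefl); rewrite -hq /= L1.
  case: q hq => [y|e'] _ /=; rewrite ltr_distlC => /andP [h1 h2].
  + rewrite hUu; apply: gU_pos; lra.
  + by rewrite hUu; apply: L_gU_pos; lra.
Qed.

Lemma hmap_bij : bijective hmap.
Proof.
exists (fun psi => projT1 (cid (hmap_surj psi))).
- by move=> p; apply: hmap_inj; case: (cid (hmap_surj (hmap p))).
- by move=> psi; case: (cid (hmap_surj psi)).
Qed.

Lemma main_exists : exists h : FX d K -> CF d,
    homeomorphism (@fopen R X d K) (@cfopen R X d) h /\
    (forall x : X, h (inl x) = cf_emb d x).
Proof.
exists hmap; split => //; split; first exact: hmap_bij.
by split; [exact: hmap_cont | exact: hmap_open].
Qed.

End Main.

Theorem corollary4p7 (R : realType) (X : Type) (d : X -> X -> R)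
  (Hmetric : is_metric d) (Hproper : proper_metric d) (Hgeod : geodesic d)
  (K : nat -> set X) (HK : exhaustion d K) :
  exists h : FX d K -> CF d,
    homeomorphism (@fopen R X d K) (@cfopen R X d) h /\
    (forall x : X, h (inl x) = cf_emb d x).
Proof.
case: (pselect (exists x : X, True)) => [[x0 _]|hX].
  exact: (main_exists Hmetric Hproper Hgeod HK x0).
have noFX : FX d K -> False.
  case=> [x|e]; first by apply: hX; exists x.
  by have [y _] := end_ne e 0%N; apply: hX; exists y.
have noCF : CF d -> False.
  move=> psi; have [y _] := svalP psi [::] 1 ltr01; by apply: hX; exists y.
exists (fun p => False_rect _ (noFX p)); split; last by move=> x; exfalso; apply: hX; exists x.
split.
  exists (fun psi => False_rect _ (noCF psi)); first by move=> p; case: (noFX p).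
  by move=> psi; case: (noCF psi).
split.
  by move=> W _ p; case: (noFX p).
by move=> W _ phi; case: (noCF phi).
Qed.
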